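(* Let $\mathbf{W}=\langle W;\to,\neg,{}^{+},{}^{-},1\rangle$ be a quasi-Wajsberg* algebra and let $\mu,\tau$ be the relations on $W$ given by: $\langle x,y\rangle\in\mu$ iff $x\le y$ and $y\le x$; $\langle x,y\rangle\in\tau$ iff $x=y$ or $x,y\in R(W)$. Then: (1) for any $x,y\in W$, $\langle x,y\rangle\in\mu$ iff $0\to x=0\to y$; (2) $\mu\cap\tau=\Delta$, the diagonal relation on $W$; (3) if $G(\mu\cup\tau)$ denotes the union of all finite relational products $\theta_1\circ\theta_2\circ\cdots\circ\theta_k$ ($k<\infty$) with each $\theta_i\in\{\mu,\tau\}$, then $G(\mu\cup\tau)=\nabla$, the all relation $W\times W$; (4) $\mu\circ\tau=\nabla$ iff $x/\mu\cap y/\tau\neq\varnothing$ for all $x,y\in W$.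
   Context: A quasi-Wajsberg* algebra is an algebra $\langle W;\to,\neg,{}^{+},{}^{-},1\rangle$ of type $\langle2,1,1,1,0\rangle$ such that for all $x,y,z\in W$: (QW*1) $x\to y=\neg y\to\neg x$; (QW*2) $(x\to 1)\to((y\to 1)\to z)=(y\to 1)\to((x\to 1)\to z)$; (QW*3) $(1\to x)\to 1=1$; (QW*4) $(z\to z)\to(x\to y)=x\to y$; (QW*5) $(1\to 1)\to x^{+}=((1\to 1)\to x)^{+}=(x\to 1)\to 1$ and $(1\to 1)\to x^{-}=((1\to 1)\to x)^{-}=(x\to\neg 1)\to\neg 1$; (QW*6) $x\to y=(y^{+}\to x^{-})\to(x^{+}\to y^{-})$; (QW*7) $\neg(x\to y)=y\to x$; (QW*8) $\neg\neg x=x$; (QW*9) $(x\to(\neg x\to y))^{+}=x^{+}\to(\neg x^{+}\to y^{+})$; (QW*10) $x\vee y=y\vee x$; (QW*11) $x\vee(y\vee z)=(x\vee y)\vee z$; (QW*12) $x\to(y\vee z)=(x\to y)\vee(x\to z)$; where $x\vee y:=((x^{+}\to y^{+})^{+}\to(\neg x)^{-})\to((y^{-}\to x^{-})^{-}\to x^{-})$. Conventions: ${}^+,{}^-$ bind tighter than $\neg$, which binds tighter than $\to$. Put $0:=1\to 1$, $x\le y$ iff $x\vee y=0\to y$, and $R(W):=\{x\in W:0\to x=x\}$. $x/\theta$ denotes the $\theta$-class of $x$, and $\circ$ is relational composition: $\langle x,y\rangle\in\mu\circ\tau$ iff there is $z$ with $\langle x,z\rangle\in\mu$ and $\langle z,y\rangle\in\tau$.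 *)

(* Defs.v *)
From Stdlib Require Import List.
Set Implicit Arguments.

Record qw_ops : Type := QWOps {
  carrier :> Type;
  imp : carrier -> carrier -> carrier;
  neg : carrier -> carrier;
  pl : carrier -> carrier;
  mi : carrier -> carrier;
  one : carrier
}.
Arguments imp {q}. Arguments neg {q}. Arguments pl {q}. Arguments mi {q}. Arguments one {q}.

Section Derived.
Variable W : qw_ops.

Definition zero : W := @imp W (@one W) (@one W).

Definition join (x y : W) : W :=
  imp (imp (pl (imp (pl x) (pl y))) (mi (neg x)))
      (imp (mi (imp (mi y) (mi x))) (mi x)).

Definition le (x y : W) : Prop := join x y = imp zero y.

Definition inR (x : W) : Prop := imp zero x = x.
End Derived.
Arguments zero {W}. Arguments join {W}. Arguments le {W}. Arguments inR {W}.

Definition is_quasi_wajsberg_star (W : qw_ops) : Prop :=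
  (forall x y : W, imp x y = imp (neg y) (neg x)) /\
  (forall x y z : W, imp (imp x one) (imp (imp y one) z)
                   = imp (imp y one) (imp (imp x one) z)) /\
  (forall x : W, imp (imp one x) one = one) /\
  (forall x y z : W, imp (imp z z) (imp x y) = imp x y) /\
  (forall x : W, imp (imp one one) (pl x) = pl (imp (imp one one) x) /\
                 pl (imp (imp one one) x) = imp (imp x one) one) /\
  (forall x : W, imp (imp one one) (mi x) = mi (imp (imp one one) x) /\
                 mi (imp (imp one one) x) = imp (imp x (neg (@one W))) (neg (@one W))) /\
  (forall x y : W, imp x y = imp (imp (pl y) (mi x)) (imp (pl x) (mi y))) /\
  (forall x y : W, neg (imp x y) = imp y x) /\
  (forall x : W, neg (neg x) = x) /\
  (forall x y : W, pl (imp x (imp (neg x) y))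
                 = imp (pl x) (imp (neg (pl x)) (pl y))) /\
  (forall x y : W, join x y = join y x) /\
  (forall x y z : W, join x (join y z) = join (join x y) z) /\
  (forall x y z : W, imp x (join y z) = join (imp x y) (imp x z)).

Definition rcomp (T : Type) (m t : T -> T -> Prop) : T -> T -> Prop :=
  fun x y => exists z, m x z /\ t z y.

Fixpoint rcomp_list (T : Type) (th : T -> T -> Prop) (l : list (T -> T -> Prop))
  : T -> T -> Prop :=
  match l with
  | nil => th
  | th' :: l' => rcomp th (rcomp_list th' l')
  end.

Definition Gen (T : Type) (m t : T -> T -> Prop) : T -> T -> Prop :=
  fun x y => exists (th : T -> T -> Prop) (l : list (T -> T -> Prop)),
    (th = m \/ th = t) /\ Forall (fun r => r = m \/ r = t) l /\ rcomp_list th l x y.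

Definition mu_rel {W : qw_ops} : W -> W -> Prop :=
  fun x y => le x y /\ le y x.

Definition tau_rel {W : qw_ops} : W -> W -> Prop :=
  fun x y => x = y \/ (inR x /\ inR y).

(* Main.v *)
Require Import Defs.
From Stdlib Require Import List.

Theorem proposition4p2 (W : qw_ops) (HW : is_quasi_wajsberg_star W) :
  (forall x y : W, mu_rel x y <-> imp zero x = imp zero y) /\
  (forall x y : W, (mu_rel x y /\ tau_rel x y) <-> x = y) /\
  (forall x y : W, Gen (@mu_rel W) (@tau_rel W) x y) /\
  ((forall x y : W, rcomp (@mu_rel W) (@tau_rel W) x y) <->
   (forall x y : W, exists z : W, mu_rel x z /\ tau_rel y z)).
Proof.
  destruct HW as (Q1 & Q2 & Q3 & Q4 & Q5 & Q5b & Q6 & Q7 & Q8 & Q9 & Q10 & Q11 & Q12).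
  assert (L1 : forall x : W, imp x x = zero).
  { intro w. unfold zero.
    assert (E1 := Q4 w w one). assert (E2 := Q4 one one w).
    rewrite <- (Q7 (imp one one) (imp w w)) in E2. rewrite E1 in E2.
    rewrite Q7 in E2. exact E2. }
  assert (Z4 : forall a b : W, imp zero (imp a b) = imp a b).
  { intros a b. exact (Q4 a b one). }
  assert (Z1 : imp zero (@one W) = one).
  { pose proof (Z4 (imp one one) one) as E. rewrite Q3 in E. exact E. }
  assert (N0 : neg (@zero W) = zero).
  { unfold zero. rewrite Q7. reflexivity. }
  assert (P0 : pl (@zero W) = zero).
  { destruct (Q5 zero) as [_ E]. fold (@zero W) in E.
    rewrite L1, Z1 in E. exact E. }
  assert (M0 : mi (@zero W) = zero).
  { destruct (Q5b zero) as [_ E]. fold (@zero W) in E.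
    rewrite L1 in E. rewrite E.
    assert (E2 : imp zero (neg (@one W)) = neg one).
    { rewrite Q1, Q8, N0. rewrite <- (Q8 (imp one zero)). rewrite Q7, Z1. reflexivity. }
    rewrite E2. apply L1. }
  assert (JJ : forall x : W, join x x = imp zero x).
  { intro x. unfold join. rewrite !L1, P0, M0.
    rewrite (Q6 zero x). rewrite P0, M0.
    f_equal.
    destruct (Q5b (neg x)) as [E1 E2]. fold (@zero W) in E1, E2.
    rewrite E1, E2.
    rewrite <- Q1. rewrite Q1, Q8, Q7.
    rewrite <- (Q7 zero (pl x)).
    destruct (Q5 x) as [F1 F2]. fold (@zero W) in F1, F2.
    rewrite F1, F2, Q7. reflexivity. }
  assert (J0 : forall x y : W, join x y = join (imp zero x) (imp zero y)).
  { intros x y. rewrite <- Q12. symmetry. unfold join. apply Z4. }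
  assert (ZZ : forall x : W, imp zero (imp zero x) = imp zero x).
  { intro x. apply Z4. }
  assert (P1 : forall x y : W, mu_rel x y <-> imp zero x = imp zero y).
  { intros x y. unfold mu_rel, le. split.
    - intros [H1 H2]. rewrite <- H1, <- H2. apply Q10.
    - intro H. split.
      + rewrite J0, <- H, <- J0, JJ. reflexivity.
      + rewrite J0, H, <- J0, JJ. reflexivity. }
  split; [exact P1|].
  split.
  { intros x y. split.
    - intros [H1 [H2 | [H2 H3]]]; [exact H2|].
      apply P1 in H1. unfold inR in H2, H3. rewrite <- H2, <- H3. exact H1.
    - intros <-. split; [apply P1; reflexivity | left; reflexivity]. }
  split.
  { intros x y. exists (@mu_rel W), (tau_rel :: mu_rel :: nil).
    split; [left; reflexivity|].
    split; [constructor; [right; reflexivity | constructor; [left; reflexivity | constructor]]|].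
    simpl. unfold rcomp. exists (imp zero x). split; [apply (proj2 (P1 _ _)); symmetry; apply ZZ|].
    exists (imp zero y). split.
    - right. split; unfold inR; apply ZZ.
    - apply (proj2 (P1 _ _)). apply ZZ. }
  split.
  - intros H x y. destruct (H x y) as [z [H1 H2]]. exists z. split; [exact H1|].
    destruct H2 as [<- | [A B]]; [left; reflexivity | right; split; assumption].
  - intros H x y. destruct (H x y) as [z [H1 H2]]. exists z. split; [exact H1|].
    destruct H2 as [<- | [A B]]; [left; reflexivity | right; split; assumption].
Qed.
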